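(* Let $A\in\mathcal{PM}(n)$. A row vector $v\in\{0,1\}^n$ is a poset vector of $A$ if and only if $vA=v$, where the product is the Boolean matrix product. Equivalently, the set of order ideals of $P_A$ equals $\{\mathrm{supp}(v): v\in\{0,1\}^n,\ vA=v\}$.
   Context: Let $X_n=\{0,1,\ldots,n-1\}$. A naturally labeled (NL) poset on $X_n$ is a partial order $\preceq$ on $X_n$ such that $x\preceq y$ implies $x\le y$ in the usual integer order. Its poset matrix is the $n\times n$ $(0,1)$-matrix $A=(a_{i,j})_{i,j\in X_n}$ with $a_{i,j}=1$ if $j\preceq i$ and $0$ otherwise; $\mathcal{PM}(n)$ is the set of all such matrices and $P_A$ the NL poset with poset matrix $A$. Boolean arithmetic: $1+1=1$, so $(vA)_j=\max_i v_ia_{i,j}$. For $v\in\{0,1\}^n$, $A^v=\begin{bmatrix}A&\mathbf{0}\\ v&1\end{bmatrix}$, and $v$ is a poset vector of $A$ if $A^v\in\mathcal{PM}(n+1)$. $\mathrm{supp}(v)=\{j: v_j=1\}$; an order ideal is a downward closed subset. *)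

(* Defs.v *)
(* Boolean (0,1)-matrices are 'M[bool]_(m,n); true = 1, false = 0. *)
From mathcomp Require Import all_boot all_algebra.
Set Implicit Arguments. Unset Strict Implicit. Unset Printing Implicit Defensive.

Definition bmulmx (m k p : nat) (B : 'M[bool]_(m, k)) (C : 'M[bool]_(k, p))
  : 'M[bool]_(m, p) := \matrix_(i, j) [exists l, B i l && C l j].

(* A is the poset matrix of a naturally labeled poset on X_n:
   the relation  j ⪯ i  :<->  A i j = 1  is a partial order, and
   j ⪯ i implies j <= i. *)
Definition is_poset_matrix (n : nat) (A : 'M[bool]_n) : Prop :=
  [/\ (forall i, A i i),
      (forall i j, A i j -> A j i -> i = j),
      (forall i j k, A i j -> A j k -> A i k)
    & (forall i j : 'I_n, A i j -> (j <= i)%N)].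

Definition ext_mx (n : nat) (A : 'M[bool]_n) (v : 'rV[bool]_n) : 'M[bool]_(n + 1) :=
  block_mx A (const_mx false : 'M[bool]_(n, 1)) v (const_mx true : 'M[bool]_1).

Definition poset_vector (n : nat) (A : 'M[bool]_n) (v : 'rV[bool]_n) : Prop :=
  is_poset_matrix (ext_mx A v).

Definition supp (n : nat) (v : 'rV[bool]_n) : {set 'I_n} := [set j | v ord0 j].

Definition order_ideal (n : nat) (A : 'M[bool]_n) (S : {set 'I_n}) : Prop :=
  forall i j, i \in S -> A i j -> j \in S.

(* Main.v *)
Require Import Defs.
From mathcomp Require Import all_boot all_algebra.

Lemma ord_split_ind (n : nat) (P : 'I_(n + 1) -> Prop) :
  (forall j : 'I_n, P (lshift 1 j)) -> P (rshift n (ord0 : 'I_1)) -> forall i, P i.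
Proof.
move=> Hl Hr i; rewrite -(splitK i); case: (split i) => [j|k] /=; first exact: Hl.
by rewrite (ord1 k).
Qed.

Lemma closureP (n : nat) (A : 'M[bool]_n) (v : 'rV[bool]_n) :
  (forall i, A i i) ->
  (bmulmx v A = v <-> forall j k, v ord0 j -> A j k -> v ord0 k).
Proof.
move=> Hr; split.
  move=> H j k Hj Hjk; rewrite -H mxE; apply/existsP; exists j; by rewrite Hj Hjk.
move=> C; apply/matrixP => i j; rewrite mxE (ord1 i).
apply/existsP/idP => [[l /andP[H1 H2]]|Hj]; first exact: C H1 H2.
by exists j; rewrite Hj Hr.
Qed.

Lemma posetvecP (n : nat) (A : 'M[bool]_n) (v : 'rV[bool]_n) :
  is_poset_matrix A ->
  (poset_vector A v <-> forall j k, v ord0 j -> A j k -> v ord0 k).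
Proof.
case=> Hr Ha Ht Hn; split.
  case=> _ _ T _ j k Hj Hjk.
  have := T (rshift n ord0) (lshift 1 j) (lshift 1 k).
  by rewrite /ext_mx !block_mxEdl block_mxEul; apply.
move=> C; split.
- apply: ord_split_ind => [j|]; rewrite /ext_mx ?block_mxEul ?block_mxEdr ?mxE //.
- apply: ord_split_ind => [i|]; apply: ord_split_ind => [j|];
    rewrite /ext_mx ?block_mxEul ?block_mxEdr ?block_mxEur ?block_mxEdl ?mxE //.
  by move=> H1 H2; rewrite (Ha _ _ H1 H2).
- apply: ord_split_ind => [i|]; apply: ord_split_ind => [j|];
    apply: ord_split_ind => [k|];
    rewrite /ext_mx ?block_mxEul ?block_mxEdr ?block_mxEur ?block_mxEdl ?mxE //.
  + exact: Ht.
  + exact: C.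
- apply: ord_split_ind => [i|]; apply: ord_split_ind => [j|];
    rewrite /ext_mx ?block_mxEul ?block_mxEdr ?block_mxEur ?block_mxEdl ?mxE //=.
  + exact: Hn.
  + by move=> _; rewrite addn0 ltnW.
Qed.

Theorem theorem5p3 (n : nat) (A : 'M[bool]_n) :
  is_poset_matrix A ->
  (forall v : 'rV[bool]_n, poset_vector A v <-> bmulmx v A = v) /\
  (forall S : {set 'I_n},
      order_ideal A S <-> exists v : 'rV[bool]_n, bmulmx v A = v /\ S = supp v).
Proof.
move=> HA; have Hr : forall i, A i i by case: HA.
split=> [v|S].
  exact: (iff_trans (@posetvecP n A v HA) (iff_sym (@closureP n A v Hr))).
split.
  move=> HS; exists (\row_(j < n) (j \in S))%R; split.
    by apply/closureP => // j k; rewrite !mxE; apply: HS.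
  by apply/setP => j; rewrite /supp inE mxE.
case=> v [/closureP Hv ->] i j; rewrite /supp !inE; exact: Hv.
Qed.
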